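(* Let $n,p,d$ be positive integers with $n>p$, and let $$H=\frac{\det(P(t^{d-1}))}{t^{(d-1)\binom{p-1}{2}}}\frac{(1-t^d)^p(1-t^{d-1})^{n-p}}{(1-t)^n},$$ where $P(t)$ is the $(p-1)\times(p-1)$ matrix whose $(i,j)$ entry is $\sum_{k\ge0}\binom{p-i}{k}\binom{n-1-j}{k}t^k$. Then $H$ is a unimodal polynomial.
   Context: A polynomial $\sum_{k=0}^n a_kt^k$ with non-negative real coefficients is unimodal if there is an integer $N$ with $a_k\le a_{k+1}\le a_N$ for all $k<N$ and $a_N\ge a_k\ge a_{k+1}$ for all $k\ge N$. ($H$ is the Hilbert series of a generic determinantal ideal with parameters $(n,p,d)$.) *)

(* Defs.v *)
From mathcomp Require Import all_boot all_order all_algebra.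
Set Implicit Arguments. Unset Strict Implicit. Unset Printing Implicit Defensive.
Import Order.TTheory GRing.Theory Num.Theory.
Local Open Scope ring_scope.

Definition unimodal (R : realDomainType) (q : {poly R}) : Prop :=
  (forall k : nat, 0 <= q`_k) /\
  exists N : nat,
    (forall k : nat, (k < N)%N -> q`_k <= q`_k.+1 /\ q`_k.+1 <= q`_N) /\
    (forall k : nat, (N <= k)%N -> q`_k.+1 <= q`_k /\ q`_k <= q`_N).

(* With 0-based Rocq indices i,j the
   paper's indices are i+1, j+1.  Since p-(i+1) < p, the terms with k >= p
   vanish, so the sum over k < p is the full sum. *)
Definition Pmat (n p : nat) : 'M[{poly rat}]_(p.-1) :=
  \matrix_(i < p.-1, j < p.-1)
    \sum_(k < p) ('C(p - i.+1, k) * 'C(n.-1 - j.+1, k))%:R *: 'X^k.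

(* Main.v *)
Require Import Defs.
From mathcomp Require Import all_boot all_order all_algebra.
From mathcomp Require Import zify ring lra.
Import Order.TTheory GRing.Theory Num.Theory.
Set Implicit Arguments. Unset Strict Implicit. Unset Printing Implicit Defensive.
Local Open Scope ring_scope.

Definition UW (a : {poly rat}) : Prop :=
  (forall k, 0 <= a`_k) /\ exists N, (forall k, (k < N)%N -> a`_k <= a`_k.+1) /\
    (forall k, (N <= k)%N -> a`_k.+1 <= a`_k).

Lemma mono_up (a : {poly rat}) N : (forall k, (k < N)%N -> a`_k <= a`_k.+1) ->
  forall i j, (i <= j)%N -> (j <= N)%N -> a`_i <= a`_j.
Proof.
move=> H i j; elim: j => [|j IH] hij hj.
  by have -> : i = 0%N by lia.
case: (ltngtP i j.+1) => h; try lia.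
- apply: le_trans (IH _ _) (H _ _); lia.
- by rewrite h.
Qed.

Lemma mono_down (a : {poly rat}) N : (forall k, (N <= k)%N -> a`_k.+1 <= a`_k) ->
  forall i j, (N <= i)%N -> (i <= j)%N -> a`_j <= a`_i.
Proof.
move=> H i j hi; elim: j => [|j IH] hij.
  by have -> : i = 0%N by lia.
case: (ltngtP i j.+1) => h; try lia.
- apply: le_trans (H _ _) (IH _); lia.
- by rewrite h.
Qed.

Lemma UW_unimodal a : UW a -> unimodal a.
Proof.
move=> [h0 [N [H1 H2]]]; split=> //; exists N; split=> k hk; split.
- exact: H1.
- have := mono_up H1 (_ : (k.+1 <= N)%N) (leqnn N); apply; lia.
- exact: H2.
- have := mono_down H2 (_ : (N <= N)%N) (_ : (N <= k)%N); apply; lia.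
Qed.

Definition win (L : nat) : {poly rat} := \sum_(j < L) 'X^j.

Lemma win_mul L : win L * (1 - 'X) = 1 - 'X^L.
Proof.
elim: L => [|L IH]; first by rewrite /win big_ord0 mul0r expr0 subrr.
rewrite /win big_ord_recr /= mulrDl -/(win L) IH exprSr; ring.
Qed.

Lemma win_coef_ge0 L k : 0 <= (win L)`_k.
Proof.
rewrite /win coef_sum sumr_ge0 // => j _; rewrite coefXn; by case: eqP.
Qed.

Lemma mul_ge0_coef (a b : {poly rat}) : (forall k, 0 <= a`_k) -> (forall k, 0 <= b`_k) ->
  forall k, 0 <= (a * b)`_k.
Proof.
move=> ha hb k; rewrite coefM sumr_ge0 // => j _; exact: mulr_ge0.
Qed.

Lemma win_rec (a : {poly rat}) L k :
  (a * win L)`_k.+1 = (a * win L)`_k + a`_k.+1 - (if (L <= k.+1)%N then a`_(k.+1 - L) else 0).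
Proof.
have := congr1 (fun q : {poly rat} => q`_k.+1) (congr1 (fun q => a * q) (win_mul L)).
rewrite /= mulrA mulrBr mulr1 mulrBr mulr1 !coefB coefMX coefMXn /=.
move=> E; case: (leqP L k.+1) => h; move: E; [rewrite ltnNge h /= => E | rewrite h /= => E].
- rewrite -[in LHS](subrK (a * win L)`_k (a * win L)`_k.+1) E; ring.
- rewrite -[in LHS](subrK (a * win L)`_k (a * win L)`_k.+1) E; ring.
Qed.

Lemma UW_win a L : UW a -> UW (a * win L).
Proof.
move=> [h0 [N [H1 H2]]].
set c := a * win L.
have c0 : forall k, 0 <= c`_k by apply: mul_ge0_coef => //; exact: win_coef_ge0.
split=> //.
have key : forall i k, c`_i.+1 < c`_i -> (i <= k)%N -> c`_k.+1 <= c`_k.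
  move=> i k; rewrite /c !win_rec.
  case: (leqP L i.+1) => hLi; last first.
    have := h0 i.+1; move=> ? ?; exfalso; lra.
  move=> hlt hik.
  have hLk : (L <= k.+1)%N by lia.
  rewrite hLk.
  have hxy : a`_i.+1 < a`_(i.+1 - L) by lra.
  suff : a`_k.+1 <= a`_(k.+1 - L) by move=> ?; lra.
  have hL : (0 < L)%N.
    case: (posnP L) => // hL0; move: hxy; rewrite hL0 subn0; by rewrite ltxx.
  case: (leqP i.+1 N) => hy.
    have e : a`_(i.+1 - L) <= a`_i.+1 by apply: (mono_up H1); lia.
    exfalso; lra.
  case: (leqP N (k.+1 - L)) => hx.
    apply: (mono_down H2) => //; lia.
  have e1 : a`_k.+1 <= a`_i.+1 by apply: (mono_down H2); lia.
  have e2 : a`_(i.+1 - L) <= a`_(k.+1 - L) by apply: (mono_up H1); lia.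
  lra.
set B := size c.
case: (boolP [exists k : 'I_B, c`_k.+1 < c`_k]) => [/existsP ex|nex].
  have ex' : exists k, (k < B)%N && (c`_k.+1 < c`_k).
    by case: ex => k hk; exists k; rewrite ltn_ord.
  case: (ex_minnP ex') => N' /andP[hN'B hN'] hmin.
  exists N'; split=> k hk; last exact: key hN' hk.
  rewrite leNgt; apply/negP => hlt.
  have := hmin k; rewrite hlt andbT; move=> /(_ ltac:(lia)); lia.
exists B; split=> k hk.
  rewrite leNgt; apply/negP => hlt.
  move/existsP: nex; apply; by exists (Ordinal hk).
have e1 : c`_k.+1 = 0 by apply: nth_default; rewrite -/B; lia.
have e2 : c`_k = 0 by apply: nth_default; rewrite -/B; lia.
by rewrite e1 e2.
Qed.

Lemma sum_pick (R : pzSemiRingType) n c (F : nat -> R) :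
  \sum_(k < n) F k * ((k : nat) == c)%:R = if (c < n)%N then F c else 0.
Proof.
rewrite (eq_bigr (fun k : 'I_n => if (k : nat) == c then F k else 0)).
  by rewrite -big_mkcond big_ord1_eq.
by move=> k _; case: eqP; rewrite ?mulr1 ?mulr0.
Qed.

Definition hpoly (m r : nat) : {poly rat} := \sum_(k < r.+1) ('C(m + k - 1, k))%:R *: 'X^k.
Definition bl (m l l' : nat) : nat := if (l <= l')%N then 'C(m, l' - l) else 0%N.
Definition rf (m l l' : nat) : {poly rat} := (bl m l l')%:R + 'X * (bl m l l'.+1)%:R.
Definition Rm (m r : nat) : 'M[{poly rat}]_r := \matrix_(l, l') rf m l l'.
Definition Gm (r : nat) : 'M[{poly rat}]_r := \matrix_(u, j) (((u : nat) == j) + (u.+1 == j))%:R.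

Lemma bl_step m l b : bl m.+1 l b.+1 = (bl m l b.+1 + bl m l b)%N.
Proof.
rewrite /bl; case: (ltngtP l b.+1) => h.
- have h' : (l <= b)%N by lia.
  by rewrite h' subSn // binS.
- rewrite (_ : (l <= b)%N = false) //; lia.
- rewrite -h subnn (_ : (l <= b)%N = false) ?bin0 //; lia.
Qed.

Lemma bl_0 m l : bl m.+1 l 0 = bl m l 0.
Proof. by rewrite /bl; case: l => [|l] //=; rewrite !subn0 !bin0. Qed.

Lemma bl_0' m l : bl m l 0 = (l == 0%N).
Proof. by rewrite /bl; case: l => [|l] //=; rewrite subn0 bin0. Qed.

Lemma rf_step m l l' : rf m.+1 l l' =
  rf m l l' + (if l' is j.+1 then rf m l j else 0) + (if (l == 0%N) && (l' == 0%N) then 'X else 0).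
Proof.
rewrite /rf; case: l' => [|j].
  rewrite bl_0 bl_step bl_0' andbT; case: eqP => _ /=; rewrite natrD; ring.
by rewrite !bl_step andbF !natrD; ring.
Qed.

Lemma rf_shift m l l' : rf m l.+1 l'.+1 = rf m l l'.
Proof. by rewrite /rf /bl !ltnS !subSS. Qed.

Lemma RG_entry m r (i j : 'I_r) :
  (Rm m r *m Gm r) i j = rf m i j + (if (j : nat) is j'.+1 then rf m i j' else 0).
Proof.
rewrite !mxE.
under eq_bigr do rewrite !mxE natrD mulrDr.
rewrite big_split /= sum_pick ltn_ord; congr (_ + _).
case: j => [[|j'] hj] /=.
  by rewrite big1 // => u _; rewrite mulr0.
under eq_bigr do rewrite eqSS.
by rewrite sum_pick (_ : (j' < r)%N) //; lia.
Qed.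

Lemma det_Gm r : \det (Gm r) = 1.
Proof.
rewrite -det_tr det_trig.
  apply: big1 => i _; have h : (i.+1 == i :> nat) = false by lia.
  by rewrite !mxE eqxx h addn0.
apply/forallP => i; apply/forallP => j; apply/implyP => hij.
have h1 : (j == i :> nat) = false by lia.
have h2 : (j.+1 == i :> nat) = false by lia.
by rewrite !mxE h1 h2.
Qed.

Lemma bl0 l l' : bl 0 l l' = (l == l').
Proof.
rewrite /bl bin0n; case: (ltngtP l l') => h.
- have h1 : (l' - l == 0)%N = false by lia.
  have h2 : (l == l') = false by lia.
  by rewrite ?h1 ?h2.
- have h2 : (l == l') = false by lia.
  by rewrite ?h2.
- by rewrite ?h subnn ?eqxx.
Qed.

Lemma det_Rm0 r : \det (Rm 0 r) = 1.
Proof.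
rewrite det_trig.
  apply: big1 => i _; rewrite !mxE /rf !bl0 eqxx.
  have h : (i == i.+1 :> nat) = false by lia.
  by rewrite h mulr0 addr0.
apply/forallP => i; apply/forallP => j; apply/implyP => hij.
rewrite !mxE /rf !bl0.
have h1 : (i == j :> nat) = false by lia.
have h2 : (i == j.+1 :> nat) = false by lia.
by rewrite h1 h2 mulr0 addr0.
Qed.

Lemma hpoly0 r : hpoly 0 r = 1.
Proof.
rewrite /hpoly big_ord_recl /= bin0 scale1r expr0 big1 ?addr0 // => i _.
by rewrite add0n /bump /= add1n subSS subn0 bin_small // scale0r.
Qed.

Lemma hpoly_r0 m : hpoly m 0 = 1.
Proof. by rewrite /hpoly big_ord1 /= bin0 scale1r expr0. Qed.

Lemma hpoly_step m r : hpoly m.+1 r.+1 = hpoly m r.+1 + 'X * hpoly m.+1 r.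
Proof.
rewrite /hpoly big_ord_recl [in X in _ = X + _]big_ord_recl /= !bin0 !expr0.
rewrite mulr_sumr -addrA; congr (_ + _).
rewrite -big_split /=; apply: eq_bigr => i _.
rewrite /bump /= add1n -scalerAr -exprS.
rewrite (_ : (m.+1 + i.+1 - 1 = (m + i).+1)%N); last lia.
rewrite (_ : (m + i.+1 - 1 = m + i)%N); last lia.
rewrite (_ : (m.+1 + i - 1 = m + i)%N); last lia.
by rewrite binS natrD scalerDl.
Qed.

Lemma det_Rm m r : \det (Rm m r) = hpoly m r.
Proof.
elim: m r => [|m IHm] r; first by rewrite det_Rm0 hpoly0.
elim: r => [|r IHr]; first by rewrite det_mx00 hpoly_r0.
set A := Rm m.+1 r.+1.
set B := Rm m r.+1 *m Gm r.+1.
have AB : forall i j : 'I_r.+1, A i j = B i j + (if ((i : nat) == 0%N) && ((j : nat) == 0%N) then 'X else 0).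
  by move=> i j; rewrite /A /B RG_entry mxE rf_step.
have minor : row' ord0 (col' ord0 A) = Rm m.+1 r.
  by apply/matrixP => x y; rewrite !mxE /= rf_shift.
have dB : \det B = hpoly m r.+1 by rewrite /B det_mulmx det_Gm mulr1 IHm.
rewrite -minor in IHr.
clearbody A B.
have cof : forall j, cofactor A ord0 j = cofactor B ord0 j.
  move=> j; rewrite /cofactor; congr (_ * \det _); apply/matrixP => x y.
  rewrite !mxE AB /=. by rewrite addr0.
have -> : \det A = \det B + 'X * cofactor A ord0 ord0.
  rewrite (expand_det_row A ord0) (expand_det_row B ord0) (bigD1 ord0) //= [in RHS](bigD1 ord0) //=.
  rewrite AB /= cof mulrDl -!addrA; congr (_ + _); rewrite addrC; congr (_ + _).
  apply: eq_bigr => j hj; rewrite AB cof /=.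
  have hj0 : ((j : nat) == 0%N) = false.
    by apply/negP => /eqP h; move/negP: hj; apply; apply/eqP/val_inj.
  by rewrite hj0 addr0.
rewrite /cofactor expr0 mul1r.
by rewrite IHr dB hpoly_step.
Qed.

Lemma widen_zero n1 n2 (F : nat -> nat) : (n1 <= n2)%N ->
  (forall u, (n1 <= u)%N -> (u < n2)%N -> F u = 0%N) ->
  (\sum_(u < n1) F u = \sum_(u < n2) F u)%N.
Proof.
move=> h H; rewrite (big_ord_widen n2 F h) big_mkcond; apply: eq_bigr => u _.
case: ifP => // /negbT; rewrite -leqNgt => hu; symmetry; apply: H => //.
Qed.

Lemma vand a b k R : (a < R)%N ->
  (\sum_(u < R) 'C(a, u) * bl b u k)%N = 'C(a + b, k).
Proof.
move=> haR; rewrite -binomial.Vandermonde.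
have -> : (\sum_(u < k.+1) 'C(a, u) * 'C(b, k - u) = \sum_(u < k.+1) 'C(a, u) * bl b u k)%N.
  by apply: eq_bigr => u _; rewrite /bl -ltnS ltn_ord.
rewrite (@widen_zero R (R + k.+1) (fun u => 'C(a, u) * bl b u k)%N) ?leq_addr //; last first.
  by move=> u hu _; rewrite bin_small ?mul0n //; lia.
rewrite [RHS](@widen_zero k.+1 (R + k.+1) (fun u => 'C(a, u) * bl b u k)%N) ?leq_addl //.
by move=> u hu _; rewrite /bl (_ : (u <= k)%N = false) ?muln0 //; lia.
Qed.

Section PM.
Variables (m r : nat).
Definition Am : 'M[{poly rat}]_(r, r.+1) := \matrix_(i, k) ('C(r - i, k))%:R.
Definition Bm : 'M[{poly rat}]_(r, r.+1) := \matrix_(j, k) ('C(m + r - j.+1, k))%:R.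
Definition Tm : 'M[{poly rat}]_(r.+1) := diag_mx (\row_k 'X^k).
Definition Wm : 'M[{poly rat}]_r := \matrix_(i, u) ('C(r - i.+1, r - u.+1))%:R.
Definition A1 : 'M[{poly rat}]_(r, r.+1) := \matrix_(u, k) (bl 1 (r - u.+1) k)%:R.
Definition B1 : 'M[{poly rat}]_(r, r.+1) := \matrix_(u, k) (bl m (r - u.+1) k)%:R.

Lemma P_fact : Pmat (m + r.+1) r.+1 = Am *m Tm *m Bm^T.
Proof.
apply/matrixP => i j; rewrite !mxE; apply: eq_bigr => k _.
rewrite mul_mx_diag !mxE subSS addnS /= scaler_nat mulr_natl mulr_natr -mulrnA.
by [].
Qed.


Lemma rev_sum (F : nat -> nat) : (\sum_(u < r) F (r - u.+1) = \sum_(u < r) F u)%N.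
Proof.
rewrite (reindex_inj rev_ord_inj) /=; apply: eq_bigr => u _; have := ltn_ord u => hu.
by rewrite (_ : (r - (r - u.+1).+1 = u)%N) //; lia.
Qed.

Lemma A_fact : Am = Wm *m A1.
Proof.
apply/matrixP => i k; have hi := ltn_ord i; rewrite !mxE.
under eq_bigr do rewrite !mxE -natrM.
rewrite -natr_sum; congr (_%:R).
rewrite (rev_sum (fun u => 'C(r - i.+1, u) * bl 1 u k)%N).
rewrite vand; last lia.
congr 'C(_, _); lia.
Qed.

Lemma B_fact : Bm = Wm *m B1.
Proof.
apply/matrixP => i k; have hi := ltn_ord i; rewrite !mxE.
under eq_bigr do rewrite !mxE -natrM.
rewrite -natr_sum; congr (_%:R).
rewrite (rev_sum (fun u => 'C(r - i.+1, u) * bl m u k)%N).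
rewrite vand; last lia.
congr 'C(_, _); lia.
Qed.

Lemma bl1 a k : bl 1 a k = ((k == a) + (k == a.+1))%N.
Proof.
rewrite /bl; case: (leqP a k) => h.
  rewrite -(subnKC h); move: (k - a)%N => d.
  rewrite addKn; case: d => [|[|d]].
  - by rewrite addn0 eqxx (_ : (a == a.+1) = false) //; lia.
  - by rewrite addn1 eqxx (_ : (a.+1 == a) = false) //; lia.
  - rewrite bin_small //.
    have e1 : (a + d.+2 == a) = false by lia.
    have e2 : (a + d.+2 == a.+1) = false by lia.
    by rewrite e1 e2.
have e1 : (k == a) = false by lia.
have e2 : (k == a.+1) = false by lia.
by rewrite e1 e2.
Qed.

Lemma bl_rev u u' : (u < r)%N -> (u' < r)%N ->
  bl m (r - u'.+1) (r - u.+1) = bl m u u' /\ bl m (r - u'.+1) (r - u.+1).+1 = bl m u u'.+1.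
Proof.
move=> hu hu'; rewrite /bl; split.
- case: (leqP u u') => h.
    rewrite (_ : (r - u'.+1 <= r - u.+1)%N); last lia.
    congr 'C(_, _); lia.
  rewrite (_ : (r - u'.+1 <= r - u.+1)%N = false) //; lia.
- case: (leqP u u'.+1) => h.
    rewrite (_ : (r - u'.+1 <= (r - u.+1).+1)%N); last lia.
    congr 'C(_, _); lia.
  rewrite (_ : (r - u'.+1 <= (r - u.+1).+1)%N = false) //; lia.
Qed.

Lemma S_fact : A1 *m Tm *m B1^T = diag_mx (\row_u 'X^(r - u.+1)) *m Rm m r.
Proof.
apply/matrixP => u u'; have hu := ltn_ord u; rewrite mul_diag_mx !mxE.
under eq_bigr do rewrite mul_mx_diag !mxE bl1 natrD !mulrDl.
rewrite big_split /=.
have e1 : forall c : nat, (c < r.+1)%N ->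
   \sum_(k < r.+1) ((k : nat) == c)%:R * 'X^k * (bl m (r - u'.+1) k)%:R
   = 'X^c * (bl m (r - u'.+1) c)%:R :> {poly rat}.
  move=> c hc.
  rewrite (eq_bigr (fun k : 'I_r.+1 => ('X^k * (bl m (r - u'.+1) k)%:R) * ((k : nat) == c)%:R)).
    by rewrite (sum_pick _ _ (fun k => 'X^k * (bl m (r - u'.+1) k)%:R)) hc.
  by move=> k _; rewrite [RHS]mulrC mulrA.
rewrite (e1 (r - u.+1)%N); last lia.
rewrite (e1 (r - u.+1).+1); last lia.
have [E1 E2] := bl_rev (ltn_ord u) (ltn_ord u').
rewrite E1 E2 /rf exprS; ring.
Qed.

Lemma det_Wm : \det Wm = 1.
Proof.
rewrite -det_tr det_trig.
  by apply: big1 => i _; rewrite !mxE binn.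
apply/forallP => i; apply/forallP => j; apply/implyP => hij.
have hj := ltn_ord j; rewrite !mxE bin_small //; lia.
Qed.

Lemma det_P : \det (Pmat (m + r.+1) r.+1) = 'X^('C(r, 2)) * hpoly m r.
Proof.
rewrite P_fact A_fact B_fact trmx_mul.
have -> : Wm *m A1 *m Tm *m (B1^T *m Wm^T) = Wm *m (A1 *m Tm *m B1^T) *m Wm^T by rewrite !mulmxA.
rewrite !det_mulmx det_tr det_Wm mul1r mulr1.
rewrite S_fact det_mulmx det_diag det_Rm; congr (_ * _).
under eq_bigr do rewrite mxE.
rewrite -expr_sum; congr (_ ^+ _).
rewrite (rev_sum id) -bin2_sum big_mkord //.
Qed.
End PM.

Lemma hcoef m r k : (hpoly m r)`_k = if (k < r.+1)%N then ('C(m + k - 1, k))%:R else 0.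
Proof.
rewrite /hpoly coef_sum.
under eq_bigr do rewrite coefZ coefXn eq_sym.
by rewrite (sum_pick _ _ (fun j => ('C(m + j - 1, j))%:R : rat)).
Qed.

Lemma UW_winpow a L k : UW a -> UW (a * win L ^+ k).
Proof.
elim: k a => [|k IH] a ha; first by rewrite expr0 mulr1.
by rewrite exprS mulrA; apply: IH; apply: UW_win.
Qed.

Lemma UW_g m' r e : (0 < e)%N -> UW ((hpoly m'.+1 r \Po 'X^e) * win e).
Proof.
move=> he.
set H := hpoly m'.+1 r \Po 'X^e.
have HE : forall j, H`_j = if (e %| j)%N then (hpoly m'.+1 r)`_(j %/ e) else 0.
  by move=> j; rewrite /H coef_comp_poly_Xn.
have H1 : forall j, 0 <= H`_j.
  move=> j; rewrite HE hcoef; case: ifP => _ //; case: ifP => _ //; exact: ler0n.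
have H2 : forall j, (r * e < j)%N -> H`_j = 0.
  move=> j hj; rewrite HE; case: ifP => // /dvdnP [q hq]; rewrite hcoef hq mulnK //.
  rewrite (_ : (q < r.+1)%N = false) //; apply/negbTE; rewrite -leqNgt.
  by rewrite -(ltn_pmul2r he) -hq.
have H3 : forall j, (e <= j)%N -> (j < r.+1 * e)%N -> H`_(j - e) <= H`_j.
  move=> j h1 h2; rewrite !HE dvdn_subl ?dvdnn //.
  case: ifP => // /dvdnP [q hq].
  have hq1 : (0 < q)%N by move: h1; rewrite hq; case: q {hq} => //; rewrite mul0n; lia.
  have hqr : (q < r.+1)%N by rewrite -(ltn_pmul2r he) -hq.
  have E : (q * e - e = q.-1 * e)%N by rewrite -subn1 mulnBl mul1n.
  rewrite hq E !mulnK // !hcoef hqr (_ : (q.-1 < r.+1)%N); last lia.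
  rewrite ler_nat; case: (q) hq1 => [//|s] _ /=.
  rewrite (_ : (m'.+1 + s.+1 - 1 = (m' + s).+1)%N); last lia.
  rewrite (_ : (m'.+1 + s - 1 = m' + s)%N); last lia.
  by rewrite binS leq_addl.
have g0 : forall k, 0 <= (H * win e)`_k by apply: mul_ge0_coef => //; exact: win_coef_ge0.
split=> //; exists (r.+1 * e).-1; split=> k hk; rewrite win_rec.
- case: (leqP e k.+1) => h.
    have := H3 k.+1 h ltac:(lia); lra.
  have := H1 k.+1; lra.
- rewrite H2; last first.
    have : (0 < r.+1 * e)%N by rewrite muln_gt0.
    rewrite mulSn; lia.
  case: ifP => _; last lra.
  have := H1 (k.+1 - e)%N; lra.
Qed.

Theorem lemma9 (n p d : nat) (hn : (0 < n)%N) (hp : (0 < p)%N) (hd : (0 < d)%N)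
  (hnp : (p < n)%N) :
  exists q : {poly rat},
    q * 'X^((d.-1) * 'C(p.-1, 2)) * (1 - 'X) ^+ n =
      \det (map_mx (fun f : {poly rat} => f \Po 'X^(d.-1)) (Pmat n p))
      * (1 - 'X^d) ^+ p * (1 - 'X^(d.-1)) ^+ (n - p)
    /\ unimodal q.
Proof.
case: p hp hnp => [//|r] _ hnp.
have [m' hm] : exists m', n = (m'.+1 + r.+1)%N by exists (n - r.+2)%N; lia.
subst n; rewrite addnK.
case: d hd => [//|e] _ /=.
case: e => [|e'].
  exists 0; rewrite !mul0r expr0 subrr expr0n /= mulr0; split=> //.
  split=> [k|]; first by rewrite coef0.
  by exists 0%N; split=> k _; rewrite !coef0.
set e := e'.+1.
have he : (0 < e)%N by [].
have hdet : \det (map_mx (fun f : {poly rat} => f \Po 'X^e) (Pmat (m'.+1 + r.+1) r.+1))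
    = (\det (Pmat (m'.+1 + r.+1) r.+1)) \Po 'X^e.
  exact: (det_map_mx (comp_poly 'X^e)).
rewrite hdet det_P comp_polyM comp_Xn_poly -exprM.
exists ((hpoly m'.+1 r \Po 'X^e) * win e * win e.+1 ^+ r.+1 * win e ^+ m').
split; last first.
  by apply: UW_unimodal; apply: UW_winpow; apply: UW_winpow; exact: UW_g.
rewrite -(win_mul e.+1) -(win_mul e).
set Hh := hpoly m'.+1 r \Po 'X^e.
set Wd := win e.+1. set We := win e. set Y := 1 - 'X.
set Z := 'X^(e * 'C(r, 2)).
rewrite !exprMn exprD (exprS We).
clearbody Hh Wd We Y Z.
move: (Y ^+ m'.+1) (Y ^+ r.+1) (Wd ^+ r.+1) (We ^+ m') => a b c f.
ring.
Qed.
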